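(* Let $\sigma$ be the substitution on $\{0,1\}$ given by $\sigma(0)=01$, $\sigma(1)=00$, let $X_\sigma\subset\{0,1\}^{\mathbb Z}$ be its subshift with shift map $S$, and let $T:X_\sigma\times\mathbb Z_3\to X_\sigma\times\mathbb Z_3$ be $T(x,z)=(Sx,z+1)$. Then the system $(X_\sigma\times\mathbb Z_3,T)$ is neither expansive nor equicontinuous.
   Context: $X_\sigma$ is the set of bi-infinite sequences over $\{0,1\}$ all of whose finite subwords are subwords of $\sigma^k(a)$ for some $a\in\{0,1\}$, $k\ge1$ (with $\sigma$ extended to words by concatenation); $S(x)_i=x_{i+1}$. $\mathbb Z_3$ is the ring of $3$-adic integers. $T$ is expansive if there is $\delta>0$ such that distinct points are separated by more than $\delta$ along some iterate; equicontinuous if the family $\{T^n\}_{n\in\mathbb Z}$ is equicontinuous. *)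

(* Defs.v *)
From HB Require Import structures.
From mathcomp Require Import all_boot all_order all_algebra.
From mathcomp Require Import all_classical all_reals.
Set Implicit Arguments. Unset Strict Implicit. Unset Printing Implicit Defensive.
Import Order.TTheory GRing.Theory Num.Theory.
Local Open Scope ring_scope.
Local Open Scope classical_set_scope.

(* Alphabet {0,1}: 0 = false, 1 = true. *)
Definition sigma (a : bool) : seq bool :=
  if a then [:: false; false] else [:: false; true].

Definition sigma_word (w : seq bool) : seq bool := flatten (map sigma w).

Definition sigma_iter (k : nat) (a : bool) : seq bool := iter k sigma_word [:: a].

Definition biseq := int -> bool.

Definition subword (x : biseq) (i : int) (n : nat) : seq bool :=
  mkseq (fun j : nat => x (i + j%:Z)) n.

Definition in_Xsigma (x : biseq) : Prop :=
  forall (i : int) (n : nat), exists (a : bool) (k : nat),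
    (1 <= k)%N /\ infix (subword x i n) (sigma_iter k a).

Definition shift (x : biseq) : biseq := fun i => x (i + 1).
Definition shift_inv (x : biseq) : biseq := fun i => x (i - 1).

(* 3-adic integers, as the inverse limit of Z/3^n Z: compatible sequences
   of residues z n in [0, 3^n). *)
Definition pow3 (n : nat) : int := (3 ^ n)%N%:Z.
Definition is_Z3 (z : nat -> int) : Prop :=
  forall n : nat, 0 <= z n < pow3 n /\ (z n.+1 = z n %[mod pow3 n])%Z.

Definition Z3_addc (c : int) (z : nat -> int) : nat -> int :=
  fun n => ((z n + c) %% pow3 n)%Z.

Definition point := (biseq * (nat -> int))%type.
Definition in_space (p : point) : Prop := in_Xsigma p.1 /\ is_Z3 p.2.
Definition T (p : point) : point := (shift p.1, Z3_addc 1 p.2).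
Definition T_inv (p : point) : point := (shift_inv p.1, Z3_addc (-1) p.2).

Definition Titer (n : int) (p : point) : point :=
  match n with
  | Posz m => iter m T p
  | Negz m => iter m.+1 T_inv p
  end.

(* Metrics: on the shift, d(x,y) = 2^{-min{|i| : x_i <> y_i}} (0 if x = y);
   on Z_3 the 3-adic metric |z - w|_3; on the product the max metric. *)
Definition dX {R : realType} (x y : biseq) : R :=
  inf [set r : R | r = 1 \/
        exists n : nat, (forall i : int, `|i| <= n%:Z -> x i = y i)
                        /\ r = (2%:R : R) ^- n.+1].
Definition dZ3 {R : realType} (z w : nat -> int) : R :=
  inf [set r : R | exists n : nat, z n = w n /\ r = (3%:R : R) ^- n].
Definition dist {R : realType} (p q : point) : R :=
  Num.max (dX p.1 q.1) (dZ3 p.2 q.2).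

Definition expansive (R : realType) : Prop :=
  exists delta : R, 0 < delta /\
    forall p q : point, in_space p -> in_space q -> p <> q ->
      exists n : int, delta < dist (Titer n p) (Titer n q).

Definition equicontinuous (R : realType) : Prop :=
  forall p : point, in_space p -> forall eps : R, 0 < eps ->
    exists delta : R, 0 < delta /\
      forall q : point, in_space q -> dist p q < delta ->
        forall n : int, dist (Titer n p) (Titer n q) < eps.

(* Main.v *)
Require Import Defs.
From mathcomp Require Import all_boot all_order all_algebra.
From mathcomp Require Import all_classical all_reals.
From mathcomp Require Import zify.
Set Implicit Arguments. Unset Strict Implicit. Unset Printing Implicit Defensive.
Import Order.TTheory GRing.Theory Num.Theory.
Local Open Scope ring_scope.

Lemma sigma_word_cat s t : sigma_word (s ++ t) = sigma_word s ++ sigma_word t.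
Proof. by rewrite /sigma_word map_cat flatten_cat. Qed.

Lemma iter_sw_cat k s t :
  iter k sigma_word (s ++ t) = iter k sigma_word s ++ iter k sigma_word t.
Proof. by elim: k => //= k ->; rewrite sigma_word_cat. Qed.

Lemma sigma_iterS k a :
  sigma_iter k.+1 a = sigma_iter k false ++ sigma_iter k (~~ a).
Proof.
rewrite /sigma_iter iterSr.
have -> : sigma_word [:: a] = [:: false] ++ [:: ~~ a] by case: a.
by rewrite iter_sw_cat.
Qed.

Lemma size_sigma_iter k a : size (sigma_iter k a) = (2 ^ k)%N.
Proof.
elim: k a => [|k IH] a; first by [].
by rewrite sigma_iterS size_cat !IH expnS mul2n addnn.
Qed.

Lemma logn2_dvd (a b : nat) : (0 < a)%N -> (0 < b)%N ->
  (forall k, (2 ^ k %| a) = (2 ^ k %| b))%N -> logn 2 a = logn 2 b.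
Proof.
move=> a0 b0 H.
have E k : (k <= logn 2 a)%N = (k <= logn 2 b)%N.
  by rewrite -!pfactor_dvdn // H.
apply/eqP; rewrite eqn_leq E leqnn -E leqnn //.
Qed.

Definition P2 (K : nat) : int := (2 ^ K)%N%:Z.

Lemma logn_shift (m t : int) (K : nat) : ~~ (P2 K %| m)%Z ->
  logn 2 (absz (m + P2 K * t)) = logn 2 (absz m).
Proof.
move=> nd.
have m0 : m != 0 by apply: contraNneq nd => ->; apply: dvdz0.
have Pt : (P2 K %| P2 K * t)%Z by apply: dvdz_mulr; apply: dvdzz.
have mt0 : m + P2 K * t != 0.
  apply: contraNneq nd => e; have -> : m = - (P2 K * t) by apply/eqP; rewrite -addr_eq0 e.
  by rewrite rpredN.
apply: logn2_dvd; rewrite ?absz_gt0 // => k.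
have -> : (2 ^ k)%N = `|P2 k|%N by [].
rewrite -!dvdzE.
case: (leqP k K) => kK.
  have Pkt : (P2 k %| P2 K * t)%Z.
    apply: dvdz_trans Pt; rewrite /P2 dvdzE /=; exact: dvdn_exp2l.
  by rewrite rpredDr.
have PK : (P2 K %| P2 k)%Z by rewrite /P2 dvdzE /=; apply: dvdn_exp2l; exact: ltnW.
have -> : (P2 k %| m)%Z = false.
  apply/negP => h; move/negP: nd; apply; exact: dvdz_trans h.
apply/negP => h; move/negP: nd; apply.
by rewrite -(rpredDr _ Pt); apply: dvdz_trans h.
Qed.

Lemma logn_shift_nat (m k : nat) : (0 < m)%N -> (m < 2 ^ k)%N ->
  logn 2 (m + 2 ^ k) = logn 2 m.
Proof.
move=> m0 mk.
have nd : ~~ (P2 k %| m%:Z)%Z.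
  rewrite dvdzE /=; apply/negP => /(dvdn_leq m0); rewrite leqNgt mk.
  done.
have := logn_shift 1 nd; rewrite mulr1 /P2 -PoszD /=.
done.
Qed.

Lemma nth_sigma k a n : (n < 2 ^ k)%N ->
  nth false (sigma_iter k a) n =
  if n.+1 == (2 ^ k)%N then a (+) odd k else odd (logn 2 n.+1).
Proof.
elim: k a n => [|k IH] a n.
  by rewrite expn0 ltnS leqn0 => /eqP ->; rewrite /= addbF.
move=> nk; rewrite sigma_iterS nth_cat size_sigma_iter.
case: (ltnP n (2 ^ k)) => h.
  rewrite IH //.
  have -> : (n.+1 == 2 ^ k.+1)%N = false.
    apply/negbTE; rewrite neq_ltn; apply/orP; left.
    have := expn_gt0 2 k; rewrite expnS; lia.
  case: eqP => // ->; by rewrite pfactorK.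
have h' : (n - 2 ^ k < 2 ^ k)%N.
  by rewrite ltn_subLR // addnn -mul2n -expnS.
rewrite IH //.
have -> : ((n - 2 ^ k).+1 == 2 ^ k)%N = (n.+1 == 2 ^ k.+1)%N.
  rewrite expnS; apply/eqP/eqP; lia.
case: eqP => [_|ne]; first by rewrite /= addNb addbN.
have -> : n.+1 = ((n - 2 ^ k).+1 + 2 ^ k)%N by lia.
rewrite logn_shift_nat //; move: ne h'; rewrite expnS; lia.
Qed.

Definition g (m : int) : bool := odd (logn 2 (absz m)).

Lemma infix_of (w : seq bool) (f : nat -> bool) n d : (d + n <= size w)%N ->
  (forall t, (t < n)%N -> nth false w (d + t) = f t) -> infix (mkseq f n) w.
Proof.
move=> dn H; apply/infixP; exists (take d w), (drop (d + n) w).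
have -> : mkseq f n = take n (drop d w).
  apply: (@eq_from_nth _ false); first by rewrite size_mkseq size_take size_drop; case: ltnP => //; lia.
  move=> i; rewrite size_mkseq => ilt.
  by rewrite nth_mkseq // nth_take // nth_drop H.
by rewrite addnC -drop_drop !cat_take_drop.
Qed.


Lemma g_pow (K Q : nat) : Q = 1%N \/ Q = 2%N ->
  g (P2 K * Q%:Z) = if Q == 1%N then odd K else ~~ odd K.
Proof.
rewrite /g /P2 -PoszM /= => -[->|->] /=; first by rewrite muln1 pfactorK.
by rewrite -expnSr pfactorK.
Qed.

Lemma window (j : int) (n : nat) : exists k, (1 <= k)%N /\
  infix (mkseq (fun t : nat => g (j + t%:Z)) n) (sigma_iter k false).
Proof.
set P := P2 n.
have Pn : n%:Z < P by rewrite /P /P2 ltz_nat; apply: ltn_expl.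
have P0 : 0 < P by lia.
have P4 : (2 ^ n.+2)%N%:Z = 4 * P by rewrite /P /P2 !expnS; lia.
set q := ((j + n%:Z - 1) %/ P)%Z.
have q1 : q * P <= j + n%:Z - 1 by apply: lez_floor; lia.
have q2 : j + n%:Z - 1 < q * P + P by have := ltz_ceil (j + n%:Z - 1) P0; rewrite mulrDl mul1r.
set b := g (q * P).
set Q : nat := if b == odd n then 1%N else 2%N.
have HQ : Q = 1%N \/ Q = 2%N by rewrite /Q; case: ifP; [left|right].
set s : int := Q%:Z - q.
have eA : P * s = P * Q%:Z - q * P by rewrite /s mulrBr [P * q]mulrC.
have eQ : P * Q%:Z = P \/ P * Q%:Z = 2 * P by case: HQ => ->; [left|right]; lia.
move: q1 q2 eA eQ; set A := q * P; set Ps := P * s; set PQ := P * Q%:Z => q1 q2 eA eQ.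
set st := j + Ps - 1.
have st0 : 0 <= st by rewrite /st; lia.
exists n.+2; split => //.
apply: (@infix_of _ _ _ (absz st)).
  rewrite size_sigma_iter.
  suff : Posz (absz st + n) <= Posz (2 ^ n.+2)%N by lia.
  rewrite P4 /st; lia.
move=> t tn.
have Hm1 : A - P < j + t%:Z by lia.
have Hm2 : j + t%:Z < A + P by lia.
have Hi : Posz (absz st + t) = j + t%:Z + Ps - 1 by rewrite /st; lia.
have Hlt : Posz (absz st + t).+1 < Posz (2 ^ n.+2)%N by rewrite P4; lia.
rewrite nth_sigma; last by lia.
have -> : ((absz st + t).+1 == 2 ^ n.+2)%N = false.
  by apply/negbTE/eqP => e; move: Hlt; rewrite e; lia.
have -> : odd (logn 2 (absz st + t).+1) = g (j + t%:Z + Ps).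
  rewrite /g; congr (odd (logn 2 _)); lia.
have [Em|Nm] := eqVneq (j + t%:Z) A.
  have -> : j + t%:Z + Ps = PQ by lia.
  rewrite /PQ g_pow // /Q -/b.
  rewrite Em /A -/b; move: (b) => bb; by case: bb; case: (odd n).
rewrite /g /Ps logn_shift //.
apply/negP => /dvdzP [r Er].
have rq : r = q.
  have h1 : (q - 1) * P < r * P by rewrite -Er mulrBl mul1r -/A.
  have h2 : r * P < (q + 1) * P by rewrite -Er mulrDl mul1r -/A.
  rewrite !ltr_pM2r // in h1 h2; lia.
by move/eqP: Nm; apply; rewrite Er rq.
Qed.

Definition xs (c : int) : biseq := fun i => g (i + c).

Lemma xs_in c : in_Xsigma (xs c).
Proof.
move=> i n; have [k [k1 hk]] := window (i + c) n; exists false, k; split => //.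
rewrite /subword.
have -> : mkseq (fun j : nat => xs c (i + j%:Z)) n = mkseq (fun t : nat => g (i + c + t%:Z)) n.
  by apply: eq_mkseq => t; rewrite /xs; congr g; lia.
done.
Qed.

Lemma Titer_fst (n : int) (p q : Defs.point) : p.1 = q.1 -> (Titer n p).1 = (Titer n q).1.
Proof.
move=> e; case: n => m /=.
  by elim: m => //= m ->.
by elim: m => [|m IH] /=; [rewrite e | rewrite IH].
Qed.

Lemma Titer_snd (n : int) (p q : Defs.point) k : p.2 k = q.2 k -> (Titer n p).2 k = (Titer n q).2 k.
Proof.
move=> e; case: n => m /=.
  by elim: m => //= m; rewrite /Z3_addc => ->.
have H : forall m, (iter m T_inv p).2 k = (iter m T_inv q).2 k.
  by elim=> //= m0; rewrite /Z3_addc => ->.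
exact: (H m.+1).
Qed.

Lemma Titer_pos (m : nat) (p : Defs.point) i : (Titer (Posz m) p).1 i = p.1 (i + m%:Z).
Proof.
elim: m i => [|m IH] i /=; first by rewrite addr0.
rewrite /shift IH; congr (p.1 _); lia.
Qed.

Section Real.
Variable R : realType.

Lemma dX_le (x y : biseq) (M : nat) : (forall i : int, `|i| <= M%:Z -> x i = y i) ->
  dX x y <= (2%:R : R) ^- M.+1.
Proof.
move=> H; apply: ge_inf.
  exists 0 => r [->|[n [_ ->]]] //; by rewrite invr_ge0 exprn_ge0.
by right; exists M.
Qed.

Lemma dX_ge (x y : biseq) : x 0 <> y 0 -> 1 <= dX x y :> R.
Proof.
move=> H; apply: lb_le_inf; first by exists 1; left.
move=> r [->|[n [h _]]] //; exfalso; apply: H; apply: h; by rewrite normr0.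
Qed.

Lemma dZ3_le (z w : nat -> int) (N : nat) : z N = w N -> dZ3 z w <= (3%:R : R) ^- N.
Proof.
move=> H; apply: ge_inf.
  exists 0 => r [n [_ ->]]; by rewrite invr_ge0 exprn_ge0.
by exists N.
Qed.

Lemma pow_small (b : nat) (delta : R) : (1 < b)%N -> 0 < delta ->
  exists N : nat, forall M, (N <= M)%N -> (b%:R : R) ^- M < delta.
Proof.
move=> b1 d0; exists (Num.bound (delta^-1)) => M NM.
have h1 : delta^-1 < (Num.bound (delta^-1))%:R by apply: archi_boundP; rewrite invr_ge0 ltW.
have h2 : ((Num.bound delta^-1)%:R : R) <= M%:R by rewrite ler_nat.
have h3 : (M%:R : R) < (b%:R) ^+ M by rewrite -natrX ltr_nat ltn_expl.
have h4 : delta^-1 < b%:R ^+ M by apply: (lt_le_trans h1); apply: (le_trans h2); exact: ltW.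
have bp : (0 : R) < b%:R ^+ M by apply: exprn_gt0; rewrite ltr0n; lia.
by rewrite -[X in _ < X]invrK ltf_pV2 // posrE ?invr_gt0.
Qed.

End Real.

Lemma g_P2 (L : nat) : g (P2 L) = odd L.
Proof. by rewrite /g /P2 /= pfactorK. Qed.

Theorem mainTheorem12 (R : realType) : ~ expansive R /\ ~ equicontinuous R.
Proof.
set z0 := fun _ : nat => 0 : int.
have Hz0 : is_Z3 z0.
  by move=> n; split => //; rewrite /z0 /pow3 lexx /= ltz_nat expn_gt0.
split.
- move=> [delta [d0 H]].
  have [N2 h2] := @pow_small R 2 delta erefl d0.
  have [N3 h3] := @pow_small R 3 delta erefl d0.
  set N := maxn N2 N3.
  set w := fun k : nat => if (N < k)%N then pow3 N else 0.
  have Hw : is_Z3 w.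
    move=> n; split.
      rewrite /w; case: ifP => h; rewrite /pow3 ?lexx /= ltz_nat ?ltn_exp2l ?expn_gt0 //.
    rewrite /w; case: (ltngtP N n) => h.
    + by rewrite (ltn_trans h (ltnSn n)).
    + by rewrite ltnNge h.
    + by rewrite h ltnSn modzz mod0z.
  pose p : Defs.point := (xs 1, z0).
  pose q : Defs.point := (xs 1, w).
  have pq : p <> q.
    move=> e; have := congr1 (fun r : Defs.point => r.2 N.+1) e.
    rewrite /= /w /z0 ltnSn /pow3 => e0; have := expn_gt0 3 N; lia.
  have [n Hn] := H p q (conj (xs_in 1) Hz0) (conj (xs_in 1) Hw) pq.
  move: Hn; apply/negP; rewrite -leNgt /dist ge_max; apply/andP; split.
    apply: le_trans (dX_le R (M := N) _) _.
      by move=> i _; rewrite (@Titer_fst n p q).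
    apply: ltW; apply: h2; rewrite /N; lia.
  apply: le_trans (dZ3_le R (N := N) _) _.
    by apply: Titer_snd; rewrite /= /w /z0 ltnn.
  apply: ltW; apply: h3; rewrite /N; lia.
- move=> H.
  pose p : Defs.point := (xs 1, z0).
  have [delta [d0 Hd]] := H p (conj (xs_in 1) Hz0) 1 ltr01.
  have [M h2] := @pow_small R 2 delta erefl d0.
  have [N3 h3] := @pow_small R 3 delta erefl d0.
  set L := (M.*2).+2.
  have LM : (M.+1 < 2 ^ L)%N.
    have := @ltn_expl 2 L erefl; rewrite /L -addnn; lia.
  pose q : Defs.point := (xs (1 + P2 L), z0).
  have Hpq : dist p q < delta.
    rewrite /dist gt_max; apply/andP; split.
      apply: le_lt_trans (dX_le R (M := M) _) _; last by apply: h2; lia.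
      move=> i; rewrite -abszE /= /xs addrA => hi.
      have [e0|ne0] := eqVneq (i + 1) 0.
        rewrite e0 add0r g_P2 /L /g /= odd_double //.
      have nd : ~~ (P2 L %| (i + 1)%R)%Z.
        rewrite dvdzE /P2 /=; apply/negP => /dvdn_leq.
        have -> : (0 < absz (i + 1)%R)%N by rewrite absz_gt0.
        move=> /(_ isT); lia.
      by rewrite /g -(logn_shift 1 nd) mulr1.
    by apply: le_lt_trans (dZ3_le R (N := N3) _) _; last by apply: h3.
  have := Hd q (conj (xs_in _) Hz0) Hpq (Posz (2 ^ L - 1)%N).
  apply/negP; rewrite -leNgt /dist le_max; apply/orP; left.
  apply: dX_ge; rewrite !Titer_pos /= /xs.
  have e1 : 0 + Posz (2 ^ L - 1)%N + 1 = P2 L by rewrite /P2; have := expn_gt0 2 L; lia.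
  have e2 : 0 + Posz (2 ^ L - 1)%N + (1 + P2 L) = P2 L.+1.
    by rewrite /P2 expnS; have := expn_gt0 2 L; lia.
  by rewrite e1 e2 !g_P2 /L /= odd_double.
Qed.
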